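(* Let $n\ge 3$ be an integer and let $\{D_I\}_{I\in\binom{[n]}{n-1}}$ be a family of positive real numbers, where $[n]=\{1,\dots,n\}$; write $D_{\hat i}=D_{[n]\setminus\{i\}}$ for $i\in[n]$. (a) There exists a positive-weighted tree $\mathcal T=(T,w)$ with $[n]\subseteq V(T)$ such that $D_{\hat i}(\mathcal T)=D_{\hat i}$ for all $i\in[n]$ if and only if $$(n-2)D_{\hat i}\le \sum_{j\in[n]\setminus\{i\}} D_{\hat j}\quad\text{for every } i\in[n],$$ and at most one of these $n$ inequalities is an equality. (b) There exists a positive-weighted tree $\mathcal T=(T,w)$ such that $[n]$ is contained in the set of leaves of $T$ and $D_{\hat i}(\mathcal T)=D_{\hat i}$ for all $i\in[n]$ if and only if $$(n-2)D_{\hat i}< \sum_{j\in[n]\setminus\{i\}} D_{\hat j}\quad\text{for every } i\in[n].$$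
   Context: All graphs are simple and finite. A positive-weighted graph $\mathcal G=(G,w)$ is a graph $G$ with a function $w:E(G)\to\mathbb R_{>0}$; for a subgraph $G'$, $w(G')$ is the sum of the weights of the edges of $G'$. For distinct vertices $i_1,\dots,i_k$ of $G$, $D_{\{i_1,\dots,i_k\}}(\mathcal G)$ is the minimum of $w(R)$ over all connected subgraphs $R$ of $G$ whose vertex set contains $i_1,\dots,i_k$. For a set $I\subseteq V(G)$ we write $D_I(\mathcal G)$ accordingly, and $D_{\hat i}(\mathcal G)=D_{[n]\setminus\{i\}}(\mathcal G)$. *)

(* Defs.v *)
From HB Require Import structures.
From mathcomp Require Import all_boot all_order all_algebra.
Set Implicit Arguments. Unset Strict Implicit. Unset Printing Implicit Defensive.
Import Order.TTheory GRing.Theory Num.Theory.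
Local Open Scope ring_scope.

Definition simple_graph (m : nat) (e : rel 'I_m) : Prop :=
  (forall x, ~~ e x x) /\ (forall x y, e x y = e y x).

Definition connected_graph (m : nat) (e : rel 'I_m) : Prop :=
  forall x y : 'I_m, connect e x y.

Definition has_cycle (m : nat) (e : rel 'I_m) : Prop :=
  exists c : seq 'I_m, [/\ 3 <= size c, uniq c & cycle e c]%N.

Definition is_tree (m : nat) (e : rel 'I_m) : Prop :=
  [/\ (0 < m)%N, simple_graph e, connected_graph e & ~ has_cycle e].

Definition pos_weight (R : realFieldType) (m : nat) (e : rel 'I_m)
  (w : 'I_m -> 'I_m -> R) : Prop :=
  forall x y, e x y -> 0 < w x y /\ w x y = w y x.

(* A subgraph (S, F): vertex set S, edge set F where each edge {x,y} of G is
   encoded by the ordered pair (x,y) with x < y. *)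
Definition subgraph (m : nat) (e : rel 'I_m) (S : {set 'I_m})
  (F : {set 'I_m * 'I_m}) : Prop :=
  forall p, p \in F -> [&& e p.1 p.2, (p.1 < p.2)%N, p.1 \in S & p.2 \in S].

Definition sub_adj (m : nat) (F : {set 'I_m * 'I_m}) : rel 'I_m :=
  fun x y => ((x, y) \in F) || ((y, x) \in F).

Definition connected_subgraph (m : nat) (e : rel 'I_m) (S : {set 'I_m})
  (F : {set 'I_m * 'I_m}) : Prop :=
  subgraph e S F /\ (forall x y, x \in S -> y \in S -> connect (sub_adj F) x y).

Definition sub_weight (R : realFieldType) (m : nat) (w : 'I_m -> 'I_m -> R)
  (F : {set 'I_m * 'I_m}) : R :=
  \sum_(p in F) w p.1 p.2.

Definition is_D (R : realFieldType) (m : nat) (e : rel 'I_m)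
  (w : 'I_m -> 'I_m -> R) (I : {set 'I_m}) (d : R) : Prop :=
  (exists S F, [/\ connected_subgraph e S F, I \subset S & sub_weight w F = d])
  /\ (forall S F, connected_subgraph e S F -> I \subset S -> d <= sub_weight w F).

Definition hat_set (n m : nat) (f : 'I_n -> 'I_m) (i : 'I_n) : {set 'I_m} :=
  [set f j | j in [set j : 'I_n | j != i]].

Definition is_leaf (m : nat) (e : rel 'I_m) (x : 'I_m) : bool :=
  #|[set y | e x y]| == 1%N.

(* Main.v *)
Require Import Defs.
From HB Require Import structures.
From mathcomp Require Import all_boot all_order all_algebra.
From mathcomp Require Import zify.
From Stdlib Require ClassicalEpsilon.
Import Order.TTheory GRing.Theory Num.Theory.
Local Open Scope ring_scope.
Set Implicit Arguments. Unset Strict Implicit. Unset Printing Implicit Defensive.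

Lemma path_cross (T : eqType) (r : rel T) (P : pred T) x p :
  path r x p -> P x -> ~~ P (last x p) -> exists y z, [/\ r y z, P y & ~~ P z].
Proof.
elim: p x => [|y p IH] x /=; first by move=> _ Px; rewrite Px.
case/andP=> rxy pp Px Pl.
case Py: (P y); first exact: (IH y pp Py Pl).
by exists x, y; rewrite rxy Px Py.
Qed.

Lemma path_entry (T : eqType) (r : rel T) (P : pred T) c :
  (forall y z, r y z -> ~~ P y -> P z -> z = c) ->
  forall y q, path r y q -> ~~ P y -> P (last y q) -> c \in q.
Proof.
move=> Hc y q; elim: q y => [|z q IH] y /=; first by move=> _ /negbTE ->.
move=> /andP[ryz pq] Py Pl.
case Pz: (P z); first by rewrite (Hc _ _ ryz Py Pz) mem_head.
by rewrite inE (IH z) ?orbT // Pz.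
Qed.

Lemma path_stay (T : eqType) (r : rel T) (P : pred T) c :
  (forall y z, r y z -> P y -> ~~ P z -> y = c) ->
  (forall y z, r y z -> ~~ P y -> P z -> z = c) ->
  forall x p, path r x p -> uniq (x :: p) -> P x -> P (last x p) -> all P p.
Proof.
move=> Hout Hin x p; elim: p x => [|y p IH] x //=.
move=> /andP[rxy pp] /andP[xn up] Px Pl.
case Py: (P y).
  by rewrite (IH y) //.
have xc := Hout _ _ rxy Px (negbT Py).
have := path_entry Hin pp (negbT Py) Pl.
by move: xn; rewrite inE negb_or -xc => /andP[_ /negbTE ->].
Qed.

Lemma connect_step (T : finType) (r : rel T) x y :
  connect r x y -> x != y -> exists z, r x z.
Proof.
move=> /connectP[[|z p]] /=; first by move=> _ ->; rewrite eqxx.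
by case/andP=> rxz _ _ _; exists z.
Qed.

Definition rem_edge m (e : rel 'I_m) (a b : 'I_m) : rel 'I_m :=
  fun y z => e y z && ~~ (((y == a) && (z == b)) || ((y == b) && (z == a))).
Definition side m (e : rel 'I_m) (a b : 'I_m) : {set 'I_m} :=
  [set v | connect (rem_edge e a b) a v].

Lemma side_a m (e : rel 'I_m) a b : a \in side e a b.
Proof. by rewrite inE connect0. Qed.

Lemma side_b m (e : rel 'I_m) a b :
  simple_graph e -> ~ has_cycle e -> e a b -> b \notin side e a b.
Proof.
move=> [irr sym] nocyc eab; apply/negP; rewrite inE => /connectP[s ps].
move: ps; case/shortenP => s' ps' us' _ Hb.
apply: nocyc; exists (a :: s'); split => //.
- case: s' ps' us' Hb => [|z [|z' s'']] //=.
    by move=> _ _ Hb; move: eab (irr a); rewrite Hb => ->.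
  by move=> /andP[+ _] _ Hb; rewrite /rem_edge -Hb !eqxx /= andbF.
- rewrite /= rcons_path; apply/andP; split.
    by apply: sub_path ps' => y z /andP[].
  by rewrite -Hb sym.
Qed.

Lemma side_cross m (e : rel 'I_m) a b y z :
  b \notin side e a b -> e y z -> y \in side e a b -> z \notin side e a b ->
  y = a /\ z = b.
Proof.
move=> nb eyz ys zs.
case H: (((y == a) && (z == b)) || ((y == b) && (z == a))).
  case/orP: H => /andP[/eqP Ey /eqP Ez]; first by [].
  by move: ys; rewrite Ey (negbTE nb).
move: zs; rewrite !inE in ys *; move/negP; case.
by apply: connect_trans ys (connect1 _); rewrite /rem_edge eyz H.
Qed.

Lemma sub_adj_e m (e : rel 'I_m) S F y z :
  simple_graph e -> subgraph e S F -> sub_adj F y z -> e y z.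
Proof.
move=> [_ sym] sg; rewrite /sub_adj => /orP[] /sg /and4P[] //.
by rewrite sym.
Qed.

Lemma cross_edge m (e : rel 'I_m) S F (X : {set 'I_m}) (a b : 'I_m) :
  simple_graph e -> subgraph e S F -> (a < b)%N ->
  (forall y z, e y z -> y \in X -> z \notin X ->
     ((y == a) && (z == b)) || ((y == b) && (z == a))) ->
  forall u v, connect (sub_adj F) u v -> u \in X -> v \notin X -> (a, b) \in F.
Proof.
move=> sim sg ab Hx u v /connectP[s ps ->] uX vX.
have [y [z [ryz yX zX]]] := path_cross ps uX vX.
have eyz := sub_adj_e sim sg ryz.
have nba : (b, a) \notin F.
  by apply/negP => /sg /and4P[_ /= ba _ _]; move: (ltn_trans ab ba); rewrite ltnn.
case/orP: (Hx _ _ eyz yX zX) => /andP[/eqP Ey /eqP Ez]; move: ryz;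
  rewrite /sub_adj Ey Ez (negbTE nba) ?orbF //.
Qed.

Lemma restrict_conn m (e : rel 'I_m) S F (X : {set 'I_m}) c :
  simple_graph e -> connected_subgraph e S F ->
  (forall y z, e y z -> y \in X -> z \notin X -> y = c) ->
  connected_subgraph e (S :&: X) [set q in F | (q.1 \in X) && (q.2 \in X)].
Proof.
move=> [irr sym] [sg con] Hc; split.
  move=> q; rewrite inE => /andP[/sg /and4P[-> -> q1 q2] /andP[x1 x2]].
  by rewrite !inE q1 q2 x1 x2.
move=> u v; rewrite !inE => /andP[uS uX] /andP[vS vX].
have /connectP[s ps Hv] := con u v uS vS.
move: ps Hv; case/shortenP => s' ps' us' _ Hv.
have sim : simple_graph e by [].
have Hout : forall y z, sub_adj F y z -> y \in X -> z \notin X -> y = c.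
  by move=> y z /(sub_adj_e sim sg) eyz; apply: Hc.
have Hin : forall y z, sub_adj F y z -> y \notin X -> z \in X -> z = c.
  move=> y z /(sub_adj_e sim sg) eyz yX zX; apply: (Hc z y) => //.
  by rewrite sym.
have vX' : v \in X by [].
have allX := path_stay Hout Hin ps' us' uX (etrans (congr1 (fun t => t \in X) (esym Hv)) vX').
apply/connectP; exists s' => //.
apply: (@sub_in_path _ (mem X) (sub_adj F)) => //=.
  move=> y z yX zX; rewrite /sub_adj !inE /= yX zX /=.
  by rewrite !andbT.
by apply/andP; split; [exact: uX | exact: allX].
Qed.

Lemma weight_lt (R : realFieldType) m (w : 'I_m -> 'I_m -> R)
  (F : {set 'I_m * 'I_m}) (P : pred ('I_m * 'I_m)) p :
  (forall q, q \in F -> 0 <= w q.1 q.2) -> p \in F -> ~~ P p -> 0 < w p.1 p.2 ->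
  sub_weight w [set q in F | P q] < sub_weight w F.
Proof.
move=> ge0 pF nP wp.
rewrite /sub_weight [X in _ < X](bigID P) /=.
have -> : \sum_(i in [set q in F | P q]) w i.1 i.2 = \sum_(i in F | P i) w i.1 i.2.
  by apply: eq_bigl => q; rewrite inE.
rewrite ltrDl (bigD1 p) /=; last by rewrite pF.
apply: (lt_le_trans wp); rewrite lerDl sumr_ge0 // => q /andP[/andP[qF _] _].
exact: ge0.
Qed.

Record NecH (R : realFieldType) m (e : rel 'I_m) (w : 'I_m -> 'I_m -> R) n
  (f : 'I_n -> 'I_m) (D : 'I_n -> R) (S : 'I_n -> {set 'I_m})
  (F : 'I_n -> {set 'I_m * 'I_m}) : Prop := {
  nh_tree : is_tree e;
  nh_w : pos_weight e w;
  nh_f : injective f;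
  nh_n : (3 <= n)%N;
  nh_S : forall i, connected_subgraph e (S i) (F i);
  nh_I : forall i, hat_set f i \subset S i;
  nh_W : forall i, sub_weight w (F i) = D i;
  nh_min : forall i S' F', connected_subgraph e S' F' -> hat_set f i \subset S' ->
     D i <= sub_weight w F' }.

Lemma pick3 n (j k : 'I_n) : (3 <= n)%N -> exists l, (l != j) && (l != k).
Proof.
move=> n3.
have : (0 < #|~: [set j; k]|)%N.
  have := cardsC [set j; k]; rewrite cards2 card_ord.
  move: (leq_b1 (j != k)); lia.
case/card_gt0P => l; rewrite !inE negb_or => H; by exists l.
Qed.

Lemma in_hat n m (f : 'I_n -> 'I_m) i l : l != i -> f l \in hat_set f i.
Proof. by move=> li; apply: imset_f; rewrite inE. Qed.

Lemma hatP n m (f : 'I_n -> 'I_m) i x : x \in hat_set f i -> exists2 l, l != i & x = f l.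
Proof. by case/imsetP => l; rewrite inE => li ->; exists l. Qed.

Section Nec.
Variables (R : realFieldType) (m : nat) (e : rel 'I_m) (w : 'I_m -> 'I_m -> R)
  (n : nat) (f : 'I_n -> 'I_m) (D : 'I_n -> R) (S : 'I_n -> {set 'I_m})
  (F : 'I_n -> {set 'I_m * 'I_m}).
Hypothesis H : NecH e w f D S F.

Let sim : simple_graph e. Proof. by case: (nh_tree H). Qed.
Let nocyc : ~ has_cycle e. Proof. by case: (nh_tree H). Qed.

Lemma edgeF i a b : (a, b) \in F i -> e a b /\ (a < b)%N.
Proof. by case: (nh_S H i) => sg _ /sg /and4P[]. Qed.

Lemma wF_ge0 i q : q \in F i -> 0 <= w q.1 q.2.
Proof.
case: q => a b /edgeF [eab _]; apply: ltW; exact: (proj1 (nh_w H eab)).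
Qed.

Lemma L3 i a b : (a, b) \in F i ->
  (exists2 l, l != i & f l \in side e a b) /\
  (exists2 l, l != i & f l \notin side e a b).
Proof.
move=> pF; have [eab ab] := edgeF pF.
have nb := side_b sim nocyc eab.
have [irr sym] := sim.
have wpos : 0 < w a b by case: (nh_w H eab).
split.
- case: (boolP [exists l, (l != i) && (f l \in side e a b)]).
    by case/existsP => l /andP[? ?]; exists l.
  rewrite negb_exists => /forallP Hall; exfalso.
  have Hc : forall y z, e y z -> y \in ~: side e a b -> z \notin ~: side e a b -> y = b.
    move=> y z eyz; rewrite !in_setC negbK => yA zA.
    by case: (side_cross nb (etrans (sym z y) eyz) zA yA).
  have cs := restrict_conn sim (nh_S H i) Hc.
  have sub : hat_set f i \subset S i :&: ~: side e a b.
    apply/subsetP => x xh; rewrite !inE (subsetP (nh_I H i) x xh) /=.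
    case/hatP: xh => l li ->; move: (Hall l); by rewrite li /= inE.
  have := nh_min H cs sub; rewrite -(nh_W H i) => Hle.
  have := weight_lt (P := fun q => (q.1 \in ~: side e a b) && (q.2 \in ~: side e a b))
    (@wF_ge0 i) pF _ wpos.
  have Hp : ~~ (((a, b).1 \in ~: side e a b) && ((a, b).2 \in ~: side e a b)).
    by rewrite /= in_setC side_a.
  by move=> /(_ Hp); rewrite ltNge Hle.
- case: (boolP [exists l, (l != i) && (f l \notin side e a b)]).
    by case/existsP => l /andP[? ?]; exists l.
  rewrite negb_exists => /forallP Hall; exfalso.
  have Hc : forall y z, e y z -> y \in side e a b -> z \notin side e a b -> y = a.
    by move=> y z eyz yA zA; case: (side_cross nb eyz yA zA).
  have cs := restrict_conn sim (nh_S H i) Hc.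
  have sub : hat_set f i \subset S i :&: side e a b.
    apply/subsetP => x xh; rewrite !inE (subsetP (nh_I H i) x xh) /=.
    case/hatP: xh => l li ->; move: (Hall l); by rewrite li negbK inE.
  have := nh_min H cs sub; rewrite -(nh_W H i) => Hle.
  have := weight_lt (P := fun q => (q.1 \in side e a b) && (q.2 \in side e a b))
    (@wF_ge0 i) pF _ wpos.
  have Hp : ~~ (((a, b).1 \in side e a b) && ((a, b).2 \in side e a b)).
    by rewrite /= (negbTE nb) andbF.
  by move=> /(_ Hp); rewrite ltNge Hle.
Qed.

Lemma sideall i j a b : (a, b) \in F i -> (a, b) \notin F j ->
  (forall l, l != j -> f l \in side e a b) \/ (forall l, l != j -> f l \notin side e a b).
Proof.
move=> pF npj; have [eab ab] := edgeF pF.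
have nb := side_b sim nocyc eab.
case: (boolP [forall l, (l != j) ==> (f l \in side e a b)]).
  by move/forallP => Hall; left => l lj; move: (Hall l); rewrite lj.
rewrite negb_forall => /existsP [l1]; rewrite negb_imply => /andP[l1j l1A].
right => l lj; apply/negP => lA.
have cs := nh_S H j.
have := cross_edge sim cs.1 ab _ (cs.2 _ _ _ _) lA l1A.
have Hx : forall y z, e y z -> y \in side e a b -> z \notin side e a b ->
   ((y == a) && (z == b)) || ((y == b) && (z == a)).
  by move=> y z eyz yA zA; case: (side_cross nb eyz yA zA) => -> ->; rewrite !eqxx.
move=> /(_ Hx (subsetP (nh_I H j) _ (in_hat f lj)) (subsetP (nh_I H j) _ (in_hat f l1j))).
by rewrite (negbTE npj).
Qed.

Lemma atmost1 i j k a b : (a, b) \in F i -> j != i -> k != i ->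
  (a, b) \notin F j -> (a, b) \notin F k -> j = k.
Proof.
move=> pF ji ki nj nk.
have [[l1 l1i l1A] [l2 l2i l2A]] := L3 pF.
have fi := nh_f H.
case: (sideall pF nj) => Hj; case: (sideall pF nk) => Hk.
- case: (eqVneq l2 j) => [<-|l2j]; last by move: (Hj _ l2j); rewrite (negbTE l2A).
  case: (eqVneq l2 k) => [<-|l2k] //; by move: (Hk _ l2k); rewrite (negbTE l2A).
- have [l /andP[lj lk]] := pick3 j k (nh_n H).
  by move: (Hj _ lj); rewrite (negbTE (Hk _ lk)).
- have [l /andP[lj lk]] := pick3 j k (nh_n H).
  by move: (Hk _ lk); rewrite (negbTE (Hj _ lj)).
- case: (eqVneq l1 j) => [<-|l1j]; last by move: (Hj _ l1j); rewrite l1A.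
  case: (eqVneq l1 k) => [<-|l1k] //; by move: (Hk _ l1k); rewrite l1A.
Qed.

Definition aw j (p : 'I_m * 'I_m) : R := if p \in F j then w p.1 p.2 else 0.
Definition gw i p : R := \sum_(j | j != i) aw j p - (n.-2)%:R * aw i p.

Lemma sum_ne (x : R) (i : 'I_n) : \sum_(j | j != i) x = x *+ n.-1.
Proof.
have -> : n.-1 = #|predC1 i| by rewrite cardC1 card_ord.
rewrite -sumr_const; by apply: eq_bigl => j; rewrite !inE.
Qed.

Lemma nm1 : n.-1 = (n.-2).+1.
Proof. have := nh_n H; lia. Qed.

Lemma aw_ge0 j p : 0 <= aw j p.
Proof. by rewrite /aw; case: ifP => // /wF_ge0. Qed.

Lemma gw_in i p : p \in F i ->
  (gw i p = w p.1 p.2 /\ forall j, j != i -> p \in F j) \/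
  (gw i p = 0 /\ exists2 j, j != i & p \notin F j).
Proof.
case: p => a b pF.
case: (boolP [exists j, (j != i) && ((a, b) \notin F j)]).
  case/existsP => j0 /andP[j0i nj0]; right; split; last by exists j0.
  rewrite /gw (bigD1 j0) //= {1}/aw (negbTE nj0) add0r.
  have -> : \sum_(j | (j != i) && (j != j0)) aw j (a, b) =
            \sum_(j | (j != i) && (j != j0)) w a b.
    apply: eq_bigr => j /andP[ji jj0]; rewrite /aw.
    case: ifP => // /negbT nj; by rewrite (atmost1 pF ji j0i nj nj0) eqxx in jj0.
  have := sum_ne (w a b) i; rewrite (bigD1 j0) //= nm1 mulrSr addrC => /(@addIr _ (w a b)) ->.
  by rewrite /aw pF mulr_natl subrr.
rewrite negb_exists => /forallP Hall; left.
have Hj : forall j, j != i -> (a, b) \in F j.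
  by move=> j ji; move: (Hall j); rewrite ji /= negbK.
split => //.
rewrite /gw (eq_bigr (fun _ => w a b)); last by move=> j ji; rewrite /aw Hj.
by rewrite sum_ne /aw pF nm1 mulrSr mulr_natl /= addrAC subrr add0r.
Qed.

Lemma gw_ge0 i p : 0 <= gw i p.
Proof.
case: (boolP (p \in F i)) => pF.
  case: (gw_in pF) => [[-> _]|[-> _]] //; exact: wF_ge0 pF.
rewrite /gw {2}/aw (negbTE pF) mulr0 subr0; apply: sumr_ge0 => j _; exact: aw_ge0.
Qed.

Lemma gw_out i p : p \notin F i -> gw i p = 0 -> forall j, j != i -> p \notin F j.
Proof.
move=> pF; rewrite /gw {2}/aw (negbTE pF) mulr0 subr0 => /psumr_eq0P H0 j ji.
apply/negP => pj; move: (H0 (fun _ _ => aw_ge0 _ _) j ji); rewrite /aw pj.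
clear H0; case: p pF pj => a b _ /edgeF [eab _].
by have [wp _] := nh_w H eab; move=> E; rewrite E ltxx in wp.
Qed.

Lemma sum_gw i : \sum_(j | j != i) D j - (n.-2)%:R * D i = \sum_p gw i p.
Proof.
have HD : forall j, D j = \sum_p aw j p.
  by move=> j; rewrite -(nh_W H j) /sub_weight big_mkcond.
rewrite /gw sumrB -mulr_sumr -HD; congr (_ - _).
rewrite (eq_bigr (fun j => \sum_p aw j p)); last by move=> j _; rewrite HD.
by rewrite exchange_big.
Qed.

Lemma nec_ineq i : (n.-2)%:R * D i <= \sum_(j | j != i) D j.
Proof.
rewrite -subr_ge0 sum_gw; apply: sumr_ge0 => p _; exact: gw_ge0.
Qed.

Lemma nec_eq i : (n.-2)%:R * D i = \sum_(j | j != i) D j ->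
  (forall j, j != i -> {subset F j <= F i}) /\
  (forall p, p \in F i -> exists2 j, j != i & p \notin F j).
Proof.
move=> /esym /eqP; rewrite -subr_eq0 sum_gw => /eqP H0.
have G0 := psumr_eq0P (fun p _ => gw_ge0 i p) H0.
split.
  move=> j ji p pj; apply/negPn/negP => pi.
  by move: (gw_out pi (G0 p isT) ji); rewrite pj.
move=> p pi; case: (gw_in pi) => [[E _]|[_ //]].
move: (G0 p isT); rewrite E; case: p pi E => a b /edgeF[eab _] _.
by have [wp _] := nh_w H eab; move=> E; rewrite E ltxx in wp.
Qed.

Lemma cross_side j a b u v : e a b -> (a < b)%N ->
  connect (sub_adj (F j)) u v -> u \in side e a b -> v \notin side e a b ->
  (a, b) \in F j.
Proof.
move=> eab ab cuv uA vA.
have nb := side_b sim nocyc eab.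
have Hx : forall y z, e y z -> y \in side e a b -> z \notin side e a b ->
   ((y == a) && (z == b)) || ((y == b) && (z == a)).
  by move=> y z eyz yA zA; case: (side_cross nb eyz yA zA) => -> ->; rewrite !eqxx.
exact: (cross_edge sim (nh_S H j).1 ab Hx cuv uA vA).
Qed.

Lemma sub_adj_sym j : symmetric (sub_adj (F j)).
Proof. by move=> x y; rewrite /sub_adj orbC. Qed.

Lemma conn_hat j u v : u != j -> v != j -> connect (sub_adj (F j)) (f u) (f v).
Proof.
move=> uj vj; apply: (nh_S H j).2; apply: (subsetP (nh_I H j)); exact: in_hat.
Qed.

Lemma cross_side2 j a b u v : e a b -> (a < b)%N -> u != j -> v != j ->
  (f u \in side e a b) != (f v \in side e a b) -> (a, b) \in F j.
Proof.
move=> eab ab uj vj; case: (boolP (f u \in side e a b)) => uA /=.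
  by move=> vA; apply: cross_side eab ab (conn_hat uj vj) uA vA.
move=> vA; apply: (cross_side eab ab (conn_hat vj uj)) => //; by move: vA; case: (f v \in side e a b).
Qed.

Lemma sep_core i a b c y q : (a, b) \in F i ->
  ((c == a) && (y == b)) || ((c == b) && (y == a)) ->
  path (sub_adj (F i)) y q -> c \notin q ->
  (c \in side e a b) != (last y q \in side e a b).
Proof.
move=> pF Hcy pq cq; have [eab ab] := edgeF pF.
have nb := side_b sim nocyc eab.
have [irr sym] := sim.
have sg := (nh_S H i).1.
case/orP: Hcy => /andP[/eqP Ec /eqP Ey]; subst c y.
  rewrite side_a /=; apply/negP => lA; move/negP: cq; apply.
  apply: (path_entry (P := mem (side e a b))) pq _ lA; last by [].
  move=> u v /(sub_adj_e sim sg) euv uA vA.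
  by case: (side_cross nb (etrans (sym v u) euv) vA uA).
rewrite (negbTE nb) /=; apply/negP => lA; move/negP: cq; apply.
apply: (path_entry (P := [pred x | x \notin side e a b])) pq _ lA; last first.
  by rewrite /= negbK side_a.
move=> u v /(sub_adj_e sim sg) euv /= uA vA.
by case: (side_cross nb euv (negbNE uA) vA).
Qed.

Lemma nec_two i k : (n.-2)%:R * D i = \sum_(j | j != i) D j ->
  (n.-2)%:R * D k = \sum_(j | j != k) D j -> i = k.
Proof.
move=> Ei Ek; case: (eqVneq i k) => // ik; exfalso.
have ki : k != i by rewrite eq_sym.
have [Si Pi] := nec_eq Ei; have [Sk Pk] := nec_eq Ek.
have Fik : F i = F k.
  by apply/setP => p; apply/idP/idP; [apply: (Sk i ik) | apply: (Si k ki)].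
have [l /andP[li lk]] := pick3 i k (nh_n H).
have c1 : connect (sub_adj (F i)) (f i) (f k).
  apply: connect_trans (conn_hat li ki).
  by rewrite Fik; apply: conn_hat ik lk.
have fik : f i != f k by apply: contra ik => /eqP /(nh_f H) ->.
move/connectP: c1 => [s ps Hl]; move: ps Hl; case/shortenP => [[|y s'] ps us _ Hl].
  by move: fik; rewrite Hl eqxx.
move: ps => /= /andP[r1 ps].
have fis' : f i \notin s' by move: us; rewrite /= inE negb_or => /andP[/andP[_ ->]].
have [a [b [pF sep]]] : exists a b, (a, b) \in F i /\
    (f i \in side e a b) != (f k \in side e a b).
  rewrite Hl /=; case/orP: r1 => Hp.
    exists (f i), y; split => //; apply: sep_core Hp _ ps fis'; by rewrite !eqxx.
  exists y, (f i); split => //; apply: sep_core Hp _ ps fis'; by rewrite !eqxx orbT.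
have [eab ab] := edgeF pF.
have [j ji nj] := Pi _ pF.
have jk : j != k by apply: contraNneq nj => ->; rewrite -Fik.
have ij : i != j by rewrite eq_sym.
have kj : k != j by rewrite eq_sym.
have := cross_side2 eab ab ij kj sep.
by rewrite (negbTE nj).
Qed.

Lemma nec_leaf i : is_leaf e (f i) ->
  (n.-2)%:R * D i = \sum_(j | j != i) D j -> False.
Proof.
move=> /cards1P [y Hy] Ei.
have ny : forall z, e (f i) z -> z = y.
  by move=> z ez; apply/set1P; rewrite -Hy inE.
have [Si Pi] := nec_eq Ei.
have sg j := (nh_S H j).1.
have adj : forall j, j != i -> sub_adj (F j) (f i) y.
  move=> j ji; have [l /andP[li lj]] := pick3 i j (nh_n H).
  have ij : i != j by rewrite eq_sym.
  have fil : f i != f l by apply: contra li => /eqP /(nh_f H) ->.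
  have [z rz] := connect_step (conn_hat ij lj) fil.
  by rewrite -(ny z (sub_adj_e sim (sg j) rz)).
pose p := if (f i < y)%N then (f i, y) else (y, f i).
have pF : forall j, j != i -> p \in F j.
  move=> j ji; move: (adj j ji); rewrite /sub_adj /p.
  case: ifP => lt /orP[] // Hp; move: (edgeF Hp) => [_ /=] lt'.
    by move: (ltn_trans lt lt'); rewrite ltnn.
  by rewrite lt' in lt.
have [j0 /andP[j0i _]] := pick3 i i (nh_n H).
have [j ji nj] := Pi p (Si j0 j0i p (pF j0 j0i)).
by rewrite pF in nj.
Qed.
End Nec.

Lemma sum_subset_le (R : realFieldType) (T : finType) (A B : {set T}) (g : T -> R) :
  A \subset B -> (forall x, x \in B -> 0 <= g x) ->
  \sum_(x in A) g x <= \sum_(x in B) g x.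
Proof.
move=> AB g0; rewrite [X in _ <= X](bigID (mem A)) /=.
have -> : \sum_(i in B | i \in A) g i = \sum_(i in A) g i.
  by apply: eq_bigl => x; rewrite andb_idl // => /(subsetP AB).
by rewrite lerDl sumr_ge0 // => x /andP[/g0].
Qed.

Definition star_e m (c : 'I_m) : rel 'I_m := fun u v => (u == c) != (v == c).
Definition star_w (R : realFieldType) m (c : 'I_m) (q : 'I_m -> R) : 'I_m -> 'I_m -> R :=
  fun u v => if u == c then q v else q u.
Definition spair m (c v : 'I_m) : 'I_m * 'I_m := if (v < c)%N then (v, c) else (c, v).

Lemma star_simple m (c : 'I_m) : simple_graph (star_e c).
Proof. by split => [x|x y]; rewrite /star_e ?eqxx // eq_sym. Qed.

Lemma star_conn_c m (c x : 'I_m) : connect (star_e c) x c.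
Proof.
case: (eqVneq x c) => [->|xc]; first exact: connect0.
by apply: connect1; rewrite /star_e (negbTE xc) eqxx.
Qed.

Lemma star_tree m (c : 'I_m) : is_tree (star_e c).
Proof.
split.
- by apply: leq_ltn_trans (ltn_ord c).
- exact: star_simple.
- move=> x y; apply: connect_trans (star_conn_c c x) _.
  rewrite (sym_connect_sym (star_simple c).2); exact: star_conn_c.
- case=> s [sz us cy].
  case: s sz us cy => [|x0 [|x1 [|x2 p]]] //= _.
  rewrite /star_e !inE !negb_or => /and4P[/and3P[x01 x02 x0p] /andP[x12 x1p] x2p _].
  case: p x0p x1p x2p => [|x3 p] /= x0p x1p x2p.
    by case: (x0 == c); case: (x1 == c); case: (x2 == c).
  have n13 : x1 != x3 by move: x1p; rewrite inE negb_or => /andP[].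
  move=> /and4P[h01 h12 h23 _].
  have e13 : (x1 == c) = (x3 == c).
    by move: h12 h23; case: (x1 == c); case: (x2 == c); case: (x3 == c).
  have e02 : (x0 == c) = (x2 == c).
    by move: h01 h12; case: (x0 == c); case: (x1 == c); case: (x2 == c).
  have : (x0 == c) || (x1 == c) by move: h01; case: (x0 == c); case: (x1 == c).
  case/orP => [/eqP E0|/eqP E1].
    by move: e02; rewrite E0 eqxx => /esym/eqP E2; move: x02; rewrite E0 E2 eqxx.
  by move: e13; rewrite E1 eqxx => /esym/eqP E3; move: n13; rewrite E1 E3 eqxx.
Qed.

Lemma star_pos (R : realFieldType) m (c : 'I_m) (q : 'I_m -> R) :
  (forall v, v != c -> 0 < q v) -> pos_weight (star_e c) (star_w c q).
Proof.
move=> qp x y; rewrite /star_e /star_w.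
case: (eqVneq x c) => [Ex|xc]; case: (eqVneq y c) => [Ey|yc] //= _.
  by split => //; apply: qp.
by split => //; apply: qp.
Qed.

Lemma spair_w (R : realFieldType) m (c v : 'I_m) (q : 'I_m -> R) : v != c ->
  star_w c q (spair c v).1 (spair c v).2 = q v.
Proof.
by move=> vc; rewrite /spair; case: ifP => _; rewrite /star_w /= ?eqxx ?(negbTE vc).
Qed.

Lemma spair_inj m (c : 'I_m) : {in [pred v | v != c] &, injective (spair c)}.
Proof.
move=> u v; rewrite !inE /spair => uc vc.
case: ifP => _; case: ifP => _ E; have /= E1 := congr1 fst E;
  have /= E2 := congr1 snd E => //.
  by move: uc; rewrite E1 eqxx.
by move: uc; rewrite E2 eqxx.
Qed.

Lemma spair_edge m (c v : 'I_m) : v != c ->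
  star_e c (spair c v).1 (spair c v).2 && ((spair c v).1 < (spair c v).2)%N.
Proof.
move=> vc; rewrite /spair /star_e; case: ifP => lt /=; rewrite eqxx (negbTE vc) //=.
by rewrite ltn_neqAle leqNgt lt andbT; apply: contraNneq vc => /val_inj ->.
Qed.

Lemma spair_adj m (c v : 'I_m) (F : {set 'I_m * 'I_m}) :
  spair c v \in F -> sub_adj F v c.
Proof. by rewrite /spair /sub_adj; case: ifP => _ ->; rewrite ?orbT. Qed.

Lemma spair_in m (c v : 'I_m) (S : {set 'I_m}) (F : {set 'I_m * 'I_m}) :
  subgraph (star_e c) S F -> v != c -> sub_adj F v c -> spair c v \in F.
Proof.
move=> sg vc; rewrite /sub_adj /spair; case: ifP => lt /orP[] // H.
  by move: (sg _ H) => /and4P[_ /= lt' _ _]; move: (ltn_trans lt lt'); rewrite ltnn.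
by move: (sg _ H) => /and4P[_ /= lt' _ _]; rewrite lt' in lt.
Qed.

Lemma star_D (R : realFieldType) m (c : 'I_m) (q : 'I_m -> R) (I : {set 'I_m}) :
  (forall v, v != c -> 0 < q v) -> (1 < #|I|)%N ->
  is_D (star_e c) (star_w c q) I (\sum_(v in I | v != c) q v).
Proof.
move=> qp I1.
have inj : {in I :\ c &, injective (spair c)}.
  by move=> u v; rewrite !inE => /andP[uc _] /andP[vc _]; apply: spair_inj.
have Hsum : \sum_(v in I | v != c) q v =
            sub_weight (star_w c q) (spair c @: (I :\ c)).
  rewrite /sub_weight big_imset //=; apply: eq_big => v; first by rewrite !inE andbC.
  by move=> /andP[_ vc]; rewrite spair_w.
split.
- exists (c |: I), (spair c @: (I :\ c)); split => //; last exact: subsetUr.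
  have sg : subgraph (star_e c) (c |: I) (spair c @: (I :\ c)).
    move=> p /imsetP[v]; rewrite !inE => /andP[vc vI] ->.
    have /andP[h1 h2] := spair_edge vc; rewrite h1 h2 /= /spair; case: ifP => _; by rewrite /= eqxx vI ?orbT.
  split => // x y.
  have Hx : forall z, z \in c |: I -> connect (sub_adj (spair c @: (I :\ c))) z c.
    move=> z; rewrite !inE; case: (eqVneq z c) => [->|zc] /= zI; first exact: connect0.
    by apply: connect1; apply: spair_adj; apply: imset_f; rewrite !inE zc.
  move=> xS yS; apply: connect_trans (Hx x xS) _.
  have sym : symmetric (sub_adj (spair c @: (I :\ c))) by move=> u v; rewrite /sub_adj orbC.
  by rewrite (sym_connect_sym sym); apply: Hx.
- move=> S' F' [sg con] IS; rewrite Hsum.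
  apply: sum_subset_le.
    apply/subsetP => p /imsetP[v]; rewrite !inE => /andP[vc vI] ->.
    apply: (spair_in sg vc).
    have [x [y [xI yI xy]]] := card_gt1P I1.
    have [u uI uv] : exists2 u, u \in I & v != u.
      case: (eqVneq v x) => [vx|vx]; last by exists x.
      by exists y => //; rewrite vx.
    have [z rz] := connect_step (con v u (subsetP IS _ vI) (subsetP IS _ uI)) uv.
    have := sub_adj_e (star_simple c) sg rz; rewrite /star_e (negbTE vc) /=.
    have [Ez|nz] := eqVneq z c; first by rewrite -Ez. by [].
  case=> a b /sg /and4P[eab _ _ _].
  by apply: ltW; case: (star_pos qp eab).
Qed.

Lemma hat_sum (R : realFieldType) n m (f : 'I_n -> 'I_m) (c : 'I_m) (q : 'I_m -> R) i :
  injective f -> q c = 0 ->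
  \sum_(v in hat_set f i | v != c) q v = \sum_(j | j != i) q (f j).
Proof.
move=> fi qc.
have -> : \sum_(v in hat_set f i | v != c) q v = \sum_(v in hat_set f i) q v.
  rewrite [RHS](bigID (fun v => v != c)) /= [X in _ = _ + X]big1 ?addr0 //.
  by move=> v /andP[_ /negPn /eqP ->].
rewrite big_imset /=; last by move=> x y _ _; apply: fi.
by apply: eq_bigl => j; rewrite inE.
Qed.

Lemma hat_card n m (f : 'I_n -> 'I_m) i : injective f -> (3 <= n)%N ->
  (1 < #|hat_set f i|)%N.
Proof.
move=> fi n3; have [l /andP[li _]] := pick3 i i n3.
have [l' /andP[l'i l'l]] := pick3 i l n3.
apply/card_gt1P; exists (f l), (f l'); split; try exact: in_hat.
by rewrite (inj_eq fi) eq_sym.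
Qed.

Lemma sumD1 (R : realFieldType) n (D : 'I_n -> R) i :
  \sum_(j | j != i) D j = \sum_j D j - D i.
Proof. by rewrite [X in _ = X - _](bigD1 i) //= addrC addrK. Qed.

Lemma star_real (R : realFieldType) n m (f : 'I_n -> 'I_m) (c : 'I_m) (q : 'I_m -> R)
   (D : 'I_n -> R) (P : R) :
  (3 <= n)%N -> injective f -> q c = 0 -> (forall v, v != c -> 0 < q v) ->
  (forall j, q (f j) = P - D j) -> P *+ n.-1 = \sum_j D j ->
  [/\ is_tree (star_e c), pos_weight (star_e c) (star_w c q), injective f &
     forall i, is_D (star_e c) (star_w c q) (hat_set f i) (D i)].
Proof.
move=> n3 fi qc qp qf HP; split => //.
- exact: star_tree.
- exact: star_pos.
move=> i; have := star_D qp (hat_card i fi n3).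
rewrite hat_sum // (eq_bigr (fun j => P - D j)); last by move=> j _; rewrite qf.
rewrite sumrB.
have -> : \sum_(j | j != i) P = P *+ n.-1.
  have -> : n.-1 = #|predC1 i| by rewrite cardC1 card_ord.
  rewrite -sumr_const; by apply: eq_bigl => j; rewrite !inE.
by rewrite HP sumD1 opprB addrC subrK.
Qed.

Lemma pos_from (R : realFieldType) n (D : 'I_n -> R) (P : R) j : (3 <= n)%N ->
  (n.-2)%:R * D j < \sum_(k | k != j) D k -> P *+ n.-1 = \sum_k D k -> 0 < P - D j.
Proof.
move=> n3 lt HP.
have n1 : n.-1 = (n.-2).+1 by lia.
rewrite -(@pmulrn_lgt0 _ _ n.-1); last by lia.
rewrite mulrnBl HP subr_gt0 n1 mulrSr -mulr_natl.
by rewrite -ltrBrDr -sumD1.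
Qed.

Lemma nec_all (R : realFieldType) n m (e : rel 'I_m) (w : 'I_m -> 'I_m -> R)
  (f : 'I_n -> 'I_m) (D : 'I_n -> R) :
  (3 <= n)%N -> is_tree e -> pos_weight e w -> injective f ->
  (forall i, is_D e w (hat_set f i) (D i)) ->
  exists S F, NecH e w f D S F.
Proof.
move=> n3 tr pw fi HD.
have HSF : forall i, exists SF : {set 'I_m} * {set ('I_m * 'I_m)},
    [/\ connected_subgraph e SF.1 SF.2, hat_set f i \subset SF.1 & sub_weight w SF.2 = D i].
  by move=> i; have [[S [F [? ? ?]]] _] := HD i; exists (S, F).
pose SF i := proj1_sig (ClassicalEpsilon.constructive_indefinite_description _ (HSF i)).
have HS i : [/\ connected_subgraph e (SF i).1 (SF i).2, hat_set f i \subset (SF i).1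
               & sub_weight w (SF i).2 = D i].
  exact: (proj2_sig (ClassicalEpsilon.constructive_indefinite_description _ (HSF i))).
exists (fun i => (SF i).1), (fun i => (SF i).2); split => //.
- by move=> i; case: (HS i).
- by move=> i; case: (HS i).
- by move=> i; case: (HS i).
- by move=> i S' F'; case: (HD i) => _; apply.
Qed.

Unset Implicit Arguments. Set Strict Implicit. Set Printing Implicit Defensive.

Theorem theorem3p1 (R : realFieldType) (n : nat) (D : 'I_n -> R) :
  (3 <= n)%N -> (forall i, 0 < D i) ->
  (* (a) *)
  ((exists (m : nat) (e : rel 'I_m) (w : 'I_m -> 'I_m -> R) (f : 'I_n -> 'I_m),
      [/\ is_tree e, pos_weight e w, injective f &
          forall i, is_D e w (hat_set f i) (D i)])
   <->
   ((forall i : 'I_n, (n.-2)%:R * D i <= \sum_(j : 'I_n | j != i) D j) /\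
    (#|[set i : 'I_n | ((n.-2)%:R * D i == \sum_(j : 'I_n | j != i) D j)%R]| <= 1)%N))
  /\
  (* (b) *)
  ((exists (m : nat) (e : rel 'I_m) (w : 'I_m -> 'I_m -> R) (f : 'I_n -> 'I_m),
      [/\ is_tree e, pos_weight e w, injective f,
          (forall i, is_leaf e (f i)) &
          forall i, is_D e w (hat_set f i) (D i)])
   <->
   (forall i : 'I_n, (n.-2)%:R * D i < \sum_(j : 'I_n | j != i) D j)).
Proof.
move=> n3 _.
have n1 : n.-1 = (n.-2).+1 by lia.
have strict_real : (forall i, (n.-2)%:R * D i < \sum_(j | j != i) D j) ->
   exists m (e : rel 'I_m) (w : 'I_m -> 'I_m -> R) (f : 'I_n -> 'I_m),
     [/\ is_tree e, pos_weight e w, injective f, (forall i, is_leaf e (f i)) &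
         forall i, is_D e w (hat_set f i) (D i)].
  move=> Hs.
  pose c : 'I_n.+1 := ord_max.
  pose P := (\sum_j D j) / (n.-1)%:R.
  pose q (v : 'I_n.+1) : R := if unlift c v is Some j then P - D j else 0.
  have HP : P *+ n.-1 = \sum_j D j.
    by rewrite /P -mulr_natr divfK // pnatr_eq0; lia.
  have qf j : q (lift c j) = P - D j by rewrite /q liftK.
  have qc : q c = 0 by rewrite /q unlift_none.
  have qp v : v != c -> 0 < q v.
    case: (unliftP c v) => [j ->|->]; last by rewrite eqxx.
    by rewrite qf => _; apply: pos_from n3 (Hs j) HP.
  have fi : injective (lift c) by apply: lift_inj.
  have [t1 t2 t3 t4] := star_real n3 fi qc qp qf HP.
  exists n.+1, (star_e c), (star_w c q), (lift c); split => //.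
  move=> i; rewrite /is_leaf; apply/cards1P; exists c; apply/setP => y.
  have nl : (lift c i == c) = false by apply/negbTE; rewrite eq_sym neq_lift.
  by rewrite !inE /star_e nl /=; case: (y == c).
split; split.
- case=> m [e [w [f [tr pw fi HD]]]].
  have [S [F H]] := nec_all n3 tr pw fi HD.
  split; first exact: nec_ineq H.
  apply/card_le1_eqP => x y; rewrite !inE => /eqP Ex /eqP Ey.
  by have := nec_two H Ey; apply.
- case=> Hle Hcard.
  case: (boolP [exists i0, (n.-2)%:R * D i0 == \sum_(j | j != i0) D j]).
    case/existsP => i0 /eqP E0.
    have Hs j : j != i0 -> (n.-2)%:R * D j < \sum_(k | k != j) D k.
      move=> ji; rewrite lt_neqAle Hle andbT; apply/eqP => Ej.
      move/card_le1_eqP: Hcard => Hc.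
      have := Hc j i0; rewrite !inE => /(_ (introT eqP Ej) (introT eqP E0)) E.
      by rewrite E eqxx in ji.
    pose q (v : 'I_n) : R := D i0 - D v.
    have HP : D i0 *+ n.-1 = \sum_j D j.
      have -> : D i0 *+ n.-1 = D i0 *+ n.-2 + D i0 by rewrite n1 mulrSr.
      by rewrite -mulr_natl E0 sumD1 subrK.
    have qc : q i0 = 0 by rewrite /q subrr.
    have qp v : v != i0 -> 0 < q v by move=> vi; apply: pos_from n3 (Hs v vi) HP.
    have fi : injective (fun j : 'I_n => j) by [].
    have := star_real n3 fi qc qp (fun j => erefl) HP.
    by move=> H; exists n, (star_e i0), (star_w i0 q), (fun j => j).
  rewrite negb_exists => /forallP Hn.
  have Hs i : (n.-2)%:R * D i < \sum_(j | j != i) D j.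
    by rewrite lt_neqAle Hle andbT; apply: Hn.
  have [m [e [w [f [t1 t2 t3 _ t5]]]]] := strict_real Hs.
  by exists m, e, w, f.
- case=> m [e [w [f [tr pw fi lf HD]]]].
  have [S [F H]] := nec_all n3 tr pw fi HD.
  move=> i; rewrite lt_neqAle (nec_ineq H) andbT; apply/eqP => E.
  by have := nec_leaf H (lf i); apply.
- exact: strict_real.
Qed.
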